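(* Let $\kappa<0$ and for $\Delta\in\mathbb R$ and $\sigma^*\ge0$ define \[ \hat E(\Delta,\sigma^* )=-\frac1\kappa\ln\left(e^{\kappa\sigma^*}+e^{-\kappa\Delta}\left(1-e^{\kappa\sigma^*}\right)\right). \] Suppose $\sigma^*>0$ is fixed. Then: (1) $\hat E(0,\sigma^* )=0$ and $|\hat E(\Delta,\sigma^* )|$ is increasing in $|\Delta|$ (i.e. increasing in $\Delta$ on $[0,\infty)$ and decreasing in $\Delta$ on $(-\infty,0]$); (2) if $\Delta>0$, then $\hat E(\Delta,\sigma^* )>0$ and \[ 0<|\Delta|\left(1-e^{\kappa\sigma^*}\right)<|\hat E(\Delta,\sigma^* )|<|\Delta|; \] (3) if $\Delta<0$, then $\hat E(\Delta,\sigma^* )<0$ and \[ 0<|\hat E(\Delta,\sigma^* )|<\min\left\{|\Delta|\left(1-e^{\kappa\sigma^*}\right),\ \sigma^*\right\}. \] Suppose instead $\Delta\in\mathbb R$ is fixed. Then: (4) $\hat E(\Delta,0)=0$ and $|\hat E(\Delta,\sigma^* )|$ is increasing in $\sigma^*\ge0$.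
   Context: In the paper's penalized Kolm–Pollak facility location model, $\Delta=\hat{\mathcal K}-\mathcal K^*$ is the signed error of the parameter $\hat{\mathcal K}$ approximating the optimal unpenalized Kolm–Pollak score $\mathcal K^*$, $\sigma^*\ge0$ is the intended penalty of the optimal solution, and $\hat E(\Delta,\sigma^* )$ equals $\hat\sigma-\sigma^*$, the error in the penalty applied; so $\Delta>0$ corresponds to over-penalizing ($\hat\sigma>\sigma^*$) and $\Delta<0$ to under-penalizing ($\hat\sigma<\sigma^*$). *)

(* Defs.v *)
From Stdlib Require Import Reals.
Open Scope R_scope.

Definition Ehat (kappa Delta sigma : R) : R :=
  - (1 / kappa) * ln (exp (kappa * sigma) + exp (- kappa * Delta) * (1 - exp (kappa * sigma))).

(* Main.v *)
Require Import Defs.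
From Stdlib Require Import Reals Lra.
Open Scope R_scope.

Lemma Ehat_eq k D s : k < 0 ->
  Ehat k D s = ln (exp (k * s) + exp (- k * D) * (1 - exp (k * s))) / (- k).
Proof. intros hk; unfold Ehat; field; lra. Qed.

Lemma divk_lt k x y : k < 0 -> x < y -> x / (-k) < y / (-k).
Proof. intros hk h. apply Rmult_lt_compat_r; [apply Rinv_0_lt_compat; lra| exact h]. Qed.

Lemma divk_0 k : k < 0 -> 0 / (-k) = 0.
Proof. intros; field; lra. Qed.

Lemma amgm a u : 0 < a < 1 -> u <> 0 -> (1 - a) * u < ln (a + (1 - a) * exp u).
Proof.
  intros ha hu. set (m := (1 - a) * u).
  assert (hm : m <> 0) by (unfold m; intro h; apply Rmult_integral in h; lra).
  assert (hum : u - m <> 0) by (unfold m; intro h; assert (a * u = 0) by lra;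
     apply Rmult_integral in H; lra).
  pose proof (exp_ineq1 (- m) ltac:(lra)) as e1.
  pose proof (exp_ineq1 (u - m) hum) as e2.
  pose proof (exp_pos m) as Ep.
  assert (E1 : exp m * exp (- m) = 1) by (rewrite <- exp_plus; replace (m + - m) with 0 by ring; apply exp_0).
  assert (E2 : exp m * exp (u - m) = exp u) by (rewrite <- exp_plus; f_equal; ring).
  assert (exp m < a + (1 - a) * exp u).
  { rewrite <- E2. 
    assert (h1 : 0 < a * exp m * (exp (- m) - (1 + - m))).
    { apply Rmult_lt_0_compat; [apply Rmult_lt_0_compat; lra|lra]. }
    assert (h2 : 0 < (1 - a) * exp m * (exp (u - m) - (1 + (u - m)))).
    { apply Rmult_lt_0_compat; [apply Rmult_lt_0_compat; lra|lra]. }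
    unfold m in *. nra. }
  rewrite <- (ln_exp m). apply ln_increasing; auto.
Qed.

Theorem theorem3 (kappa : R) (hk : kappa < 0) :
  (forall sigma : R, 0 < sigma ->
     (* (1) *)
     (Ehat kappa 0 sigma = 0 /\
      (forall d1 d2 : R, 0 <= d1 -> d1 < d2 ->
         Rabs (Ehat kappa d1 sigma) < Rabs (Ehat kappa d2 sigma)) /\
      (forall d1 d2 : R, d1 < d2 -> d2 <= 0 ->
         Rabs (Ehat kappa d2 sigma) < Rabs (Ehat kappa d1 sigma))) /\
     (* (2) *)
     (forall Delta : R, 0 < Delta ->
        0 < Ehat kappa Delta sigma /\
        0 < Rabs Delta * (1 - exp (kappa * sigma)) /\
        Rabs Delta * (1 - exp (kappa * sigma)) < Rabs (Ehat kappa Delta sigma) /\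
        Rabs (Ehat kappa Delta sigma) < Rabs Delta) /\
     (* (3) *)
     (forall Delta : R, Delta < 0 ->
        Ehat kappa Delta sigma < 0 /\
        0 < Rabs (Ehat kappa Delta sigma) /\
        Rabs (Ehat kappa Delta sigma) <
          Rmin (Rabs Delta * (1 - exp (kappa * sigma))) sigma)) /\
  (* (4) *)
  (forall Delta : R,
     Ehat kappa Delta 0 = 0 /\
     (forall s1 s2 : R, 0 <= s1 -> s1 < s2 ->
        Rabs (Ehat kappa Delta s1) <= Rabs (Ehat kappa Delta s2)) /\
     (Delta <> 0 -> forall s1 s2 : R, 0 <= s1 -> s1 < s2 ->
        Rabs (Ehat kappa Delta s1) < Rabs (Ehat kappa Delta s2))).
Proof.
  assert (E0 : forall s, Ehat kappa 0 s = 0).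
  { intro s. rewrite Ehat_eq by lra. replace (- kappa * 0) with 0 by ring.
    rewrite exp_0. replace (exp (kappa * s) + 1 * (1 - exp (kappa * s))) with 1 by ring.
    rewrite ln_1; apply divk_0; lra. }
  assert (ES0 : forall D, Ehat kappa D 0 = 0).
  { intro D. rewrite Ehat_eq by lra. replace (kappa * 0) with 0 by ring.
    rewrite exp_0. replace (1 + exp (- kappa * D) * (1 - 1)) with 1 by ring.
    rewrite ln_1; apply divk_0; lra. }
  assert (bgt : forall D, 0 < D -> 1 < exp (- kappa * D)).
  { intros D hD. rewrite <- exp_0. apply exp_increasing. nra. }
  assert (blt : forall D, D < 0 -> exp (- kappa * D) < 1).
  { intros D hD. rewrite <- exp_0. apply exp_increasing. nra. }
  assert (alt : forall s, 0 < s -> exp (kappa * s) < 1).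
  { intros s hs. rewrite <- exp_0. apply exp_increasing. nra. }
  assert (ale : forall s, 0 <= s -> exp (kappa * s) <= 1).
  { intros s hs. destruct (Req_dec s 0) as [->|]. rewrite Rmult_0_r, exp_0; lra.
    left; apply alt; lra. }
  assert (Epos : forall D s, 0 < Ehat kappa D s <-> 0 < ln (exp (kappa * s) + exp (- kappa * D) * (1 - exp (kappa * s)))).
  { intros D s. rewrite Ehat_eq by lra. split; intro h.
    - destruct (Rle_lt_dec (ln (exp (kappa * s) + exp (- kappa * D) * (1 - exp (kappa * s)))) 0); auto.
      exfalso. assert (/ - kappa > 0) by (apply Rinv_0_lt_compat; lra). unfold Rdiv in h. nra.
    - rewrite <- (divk_0 kappa hk). apply divk_lt; auto. }
  assert (monoD : forall s d1 d2, 0 < s -> d1 < d2 -> Ehat kappa d1 s < Ehat kappa d2 s).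
  { intros s d1 d2 hs hd. rewrite !Ehat_eq by lra. apply divk_lt; auto.
    pose proof (alt s hs). pose proof (exp_pos (kappa * s)). pose proof (exp_pos (- kappa * d1)).
    assert (exp (- kappa * d1) < exp (- kappa * d2)) by (apply exp_increasing; nra).
    apply ln_increasing; nra. }
  split.
  - intros s hs. pose proof (alt s hs) as ha. pose proof (exp_pos (kappa * s)) as ha0.
    set (a := exp (kappa * s)) in *.
    assert (Hlow : forall D, D <> 0 -> (1 - a) * D < Ehat kappa D s).
    { intros D hD. rewrite Ehat_eq by lra. fold a.
      replace ((1 - a) * D) with (((1 - a) * (- kappa * D)) / (- kappa)) by (field; lra).
      apply divk_lt; auto. rewrite Rmult_comm with (r1 := exp (- kappa * D)).
      apply amgm; [lra|]. intro h; apply Rmult_integral in h; lra. }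
    split; [split; [apply E0|split]|split].
    + intros d1 d2 h1 h2. pose proof (monoD s d1 d2 hs h2).
      assert (0 <= Ehat kappa d1 s).
      { destruct (Req_dec d1 0) as [->|]. rewrite E0; lra. left; rewrite <- (E0 s); apply monoD; lra. }
      rewrite !Rabs_pos_eq; lra.
    + intros d1 d2 h1 h2. pose proof (monoD s d1 d2 hs h1).
      assert (Ehat kappa d2 s <= 0).
      { destruct (Req_dec d2 0) as [->|]. rewrite E0; lra. left; rewrite <- (E0 s); apply monoD; lra. }
      rewrite !Rabs_left1; lra.
    + intros D hD. assert (hE : 0 < Ehat kappa D s) by (rewrite <- (E0 s); apply monoD; lra).
      pose proof (Hlow D ltac:(lra)).
      rewrite !Rabs_pos_eq by lra. repeat split; try nra.
      rewrite Ehat_eq by lra. fold a.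
      replace D with ((- kappa * D) / (- kappa)) at 2 by (field; lra).
      apply divk_lt; auto. rewrite <- (ln_exp (- kappa * D)) at 2.
      pose proof (bgt D hD). apply ln_increasing; nra.
    + intros D hD. assert (hE : Ehat kappa D s < 0) by (rewrite <- (E0 s); apply monoD; lra).
      pose proof (Hlow D ltac:(lra)).
      rewrite !Rabs_left by lra. repeat split; try lra.
      apply Rmin_glb_lt; [nra|].
      enough (- s < Ehat kappa D s) by lra.
      rewrite Ehat_eq by lra. fold a.
      replace (- s) with ((kappa * s) / (- kappa)) by (field; lra).
      apply divk_lt; auto. unfold a. rewrite <- (ln_exp (kappa * s)) at 1. fold a.
      pose proof (exp_pos (- kappa * D)). apply ln_increasing; nra.
  - intros D. split; [apply ES0|].
    assert (key : D <> 0 -> forall s1 s2, 0 <= s1 -> s1 < s2 ->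
                Rabs (Ehat kappa D s1) < Rabs (Ehat kappa D s2)).
    { intros hD s1 s2 h1 h2. rewrite !Ehat_eq by lra.
      pose proof (ale s1 h1). pose proof (exp_pos (kappa * s2)).
      assert (exp (kappa * s2) < exp (kappa * s1)) by (apply exp_increasing; nra).
      pose proof (exp_pos (- kappa * D)).
      set (a1 := exp (kappa * s1)) in *. set (a2 := exp (kappa * s2)) in *.
      set (b := exp (- kappa * D)) in *.
      assert (hk' : 0 < / - kappa) by (apply Rinv_0_lt_compat; lra).
      destruct (Rlt_or_le 0 D) as [hp|hn].
      + pose proof (bgt D hp). fold b in H3.
        assert (1 <= a1 + b * (1 - a1)) by nra.
        assert (a1 + b * (1 - a1) < a2 + b * (1 - a2)) by nra.
        assert (0 <= ln (a1 + b * (1 - a1))).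
        { destruct H4 as [H4| <-]. left; rewrite <- ln_1; apply ln_increasing; lra. rewrite ln_1; lra. }
        assert (ln (a1 + b * (1 - a1)) < ln (a2 + b * (1 - a2))) by (apply ln_increasing; lra).
        rewrite !Rabs_pos_eq; unfold Rdiv; nra.
      + pose proof (blt D ltac:(lra)). fold b in H3.
        assert (a1 + b * (1 - a1) <= 1) by nra.
        assert (a2 + b * (1 - a2) < a1 + b * (1 - a1)) by nra.
        assert (ln (a1 + b * (1 - a1)) <= 0).
        { destruct H4 as [H4| ->]. left; rewrite <- ln_1; apply ln_increasing; nra. rewrite ln_1; lra. }
        assert (ln (a2 + b * (1 - a2)) < ln (a1 + b * (1 - a1))) by (apply ln_increasing; nra).
        rewrite !Rabs_left1; unfold Rdiv; nra. }
    split; [|exact key].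
    intros s1 s2 h1 h2. destruct (Req_dec D 0) as [->|hD].
    + rewrite !E0; lra.
    + left; apply key; auto.
Qed.
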